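(* Let $m,L,T$ be positive integers with $T \ge (m+1)L-1$, let $k$ be an integer, and let $u_{k-T},u_{k-T+1},\dots,u_k \in \mathbb{R}^m$. Suppose that the signal $u_{[k-T,k-1]}$ is persistently exciting of order $L$. Write the Hankel matrix of $u_{[k-T+1,k]}$ in block form $$\mathcal{H}_L(u_{[k-T+1,k]}) = \begin{bmatrix} H_{11,k} & H_{12,k}\\ H_{21,k} & u_k\end{bmatrix}$$ as described in the context. Then: (i) $\operatorname{rank}\begin{bmatrix} H_{11,k} & H_{12,k}\end{bmatrix} = mL-m$, i.e. $\begin{bmatrix} H_{11,k} & H_{12,k}\end{bmatrix}$ has linearly independent rows; (ii) $mL-1 \le \operatorname{rank}\begin{bmatrix} H_{11,k}\\ H_{21,k}\end{bmatrix} \le mL$; (iii) $mL-1 \le \operatorname{rank}\,\mathcal{H}_L(u_{[k-T+1,k]}) \le mL$.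
   Context: For vectors $u_i\in\mathbb{R}^m$, $u_{[i,j]}$ denotes the stacked vector $(u_i^\top,\dots,u_j^\top)^\top \in \mathbb{R}^{(j-i+1)m}$. The (block) Hankel matrix of depth $L$ of a signal $u_{[k-T+1,k]}$ is the $mL\times(T-L+1)$ matrix $$\mathcal{H}_L(u_{[k-T+1,k]}) = \begin{bmatrix} u_{k-T+1} & u_{k-T+2} & \cdots & u_{k-L+1}\\ u_{k-T+2} & u_{k-T+3} & \cdots & u_{k-L+2}\\ \vdots & \vdots & & \vdots\\ u_{k-T+L} & u_{k-T+L+1} & \cdots & u_k\end{bmatrix},$$ whose $(i,j)$ block entry is $u_{k-T+i+j-1}$ ($i=1,\dots,L$, $j=1,\dots,T-L+1$). It is partitioned as $\begin{bmatrix} H_{11,k} & H_{12,k}\\ H_{21,k} & u_k\end{bmatrix}$, where $H_{11,k}\in\mathbb{R}^{m(L-1)\times(T-L)}$ consists of the first $m(L-1)$ rows and first $T-L$ columns, $H_{12,k}\in\mathbb{R}^{m(L-1)}$ is the first $m(L-1)$ entries of the last column, $H_{21,k}\in\mathbb{R}^{m\times(T-L)}$ is the last $m$ rows of the first $T-L$ columns, and the bottom-right block is $u_k$. The Hankel matrix of $u_{[k-T,k-1]}$ is defined analogously with all indices shifted by $-1$. A signal $u_{[s-T+1,s]}$ is persistently exciting of order $L$ if $\operatorname{rank}\mathcal{H}_L(u_{[s-T+1,s]}) = mL$. *)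

(* Defs.v *)
From HB Require Import structures.
From mathcomp Require Import all_boot all_order all_algebra.
From mathcomp Require Import reals.
Set Implicit Arguments. Unset Strict Implicit. Unset Printing Implicit Defensive.
Import Order.TTheory GRing.Theory Num.Theory.
Local Open Scope ring_scope.

(* A row index i < m*p of a block matrix with p blocks of height m:
   block number i %/ m, component i %% m. *)
Lemma mod_ord_proof (m p : nat) (i : 'I_(m * p)) : (i %% m < m)%N.
Proof.
case: m i => [|m] i; last by rewrite ltn_mod.
by case: i => i; rewrite mul0n.
Qed.

Definition mod_ord (m p : nat) (i : 'I_(m * p)) : 'I_m := Ordinal (mod_ord_proof i).

Section Hankel.
Variables (R : realType) (m L T : nat) (u : int -> 'cV[R]_m).

(* Block Hankel matrix of depth L of u_[s-T+1, s]: block (i,j) (1-based) is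
   u_(s-T+i+j-1); here with 0-based block indices i%/m and j. *)
Definition hankel (s : int) : 'M[R]_(m * L, T - L + 1) :=
  \matrix_(i < m * L, j < T - L + 1)
     u (s - T%:Z + 1 + (i %/ m)%N%:Z + j%:Z) (mod_ord i) 0.

Definition H11 (k : int) : 'M[R]_(m * (L - 1), T - L) :=
  \matrix_(i < m * (L - 1), j < T - L)
     u (k - T%:Z + 1 + (i %/ m)%N%:Z + j%:Z) (mod_ord i) 0.

Definition H12 (k : int) : 'cV[R]_(m * (L - 1)) :=
  \col_(i < m * (L - 1))
     u (k - T%:Z + 1 + (i %/ m)%N%:Z + (T - L)%N%:Z) (mod_ord i) 0.

Definition H21 (k : int) : 'M[R]_(m, T - L) :=
  \matrix_(i < m, j < T - L)
     u (k - T%:Z + 1 + (L - 1)%N%:Z + j%:Z) i 0.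

Definition pers_exciting (s : int) : Prop := \rank (hankel s) = (m * L)%N.

End Hankel.

(* Main.v *)
Require Import Defs.
From HB Require Import structures.
From mathcomp Require Import all_boot all_order all_algebra.
From mathcomp Require Import reals.
From mathcomp Require Import zify.
Import Order.TTheory GRing.Theory Num.Theory.
Local Open Scope ring_scope.

Lemma rank_split {F : fieldType} {p n a b} (A : 'M[F]_(p, n))
  (f : 'I_a -> 'I_p) (g : 'I_b -> 'I_p) :
  (forall i, (exists x, f x = i) \/ (exists y, g y = i)) ->
  (\rank A <= \rank (rowsub f A) + \rank (rowsub g A))%N.
Proof.
move=> H.
have sub : (A <= rowsub f A + rowsub g A)%MS.
  apply/row_subP => i; case: (H i) => [[x <-]|[y <-]].
    by rewrite -row_rowsub; apply: submx_trans (row_sub _ _) (addsmxSl _ _).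
  by rewrite -row_rowsub; apply: submx_trans (row_sub _ _) (addsmxSr _ _).
apply: leq_trans (mxrankS sub) _.
by case: (mxrank_adds_leqif (rowsub f A) (rowsub g A)).
Qed.

Theorem lemma1 (R : realType) (m L T : nat) (k : int) (u : int -> 'cV[R]_m) :
  (0 < m)%N -> (0 < L)%N -> (0 < T)%N -> ((m + 1) * L - 1 <= T)%N ->
  pers_exciting L T u (k - 1) ->
  [/\ \rank (row_mx (H11 L T u k) (H12 L T u k)) = (m * L - m)%N,
      (m * L - 1 <= \rank (col_mx (H11 L T u k) (H21 L T u k)) <= m * L)%N
    & (m * L - 1 <= \rank (hankel L T u k) <= m * L)%N].
Proof.
move=> m0 L0 T0 hT PE.
have TL : (L <= T)%N by nia.
rewrite /pers_exciting in PE.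
set A0 := hankel L T u (k - 1) in PE.
have mLe : (m * (L - 1) + m = m * L)%N.
  by rewrite mulnBr muln1 subnK // leq_pmulr.
have f1P : forall i : 'I_(m * (L - 1)), (i + m < m * L)%N.
  by move=> i; rewrite -mLe ltn_add2r.
pose f1 (i : 'I_(m * (L - 1))) : 'I_(m * L) := Ordinal (f1P i).
have f2P : forall i : 'I_m, (i < m * L)%N.
  by move=> i; apply: leq_trans (ltn_ord i) _; rewrite leq_pmulr.
pose f2 (i : 'I_m) : 'I_(m * L) := Ordinal (f2P i).
have E1 : row_mx (H11 L T u k) (H12 L T u k) = rowsub f1 A0.
  apply/matrixP => i j; rewrite /A0 /hankel /H11 /H12 !mxE.
  have ->: ((i + m) %/ m = (i %/ m).+1)%N.
    by move: (nat_of_ord i) => x; rewrite -{1}(mul1n m) addnC divnMDl.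
  have ->: mod_ord (f1 i) = mod_ord i.
    by apply/val_inj => /=; rewrite modnDr.
  case: splitP => j' /= Hj; rewrite ?mxE.
    congr (u _ _ _); rewrite Hj; lia.
  congr (u _ _ _); have := ltn_ord j'; rewrite Hj; lia.
have cover1 : forall i : 'I_(m * L), (exists x, f1 x = i) \/ (exists y, f2 y = i).
  move=> i; case: (ltnP i m) => h.
    by right; exists (Ordinal h); apply/val_inj.
  have P : (i - m < m * (L - 1))%N by have := ltn_ord i; lia.
  by left; exists (Ordinal P); apply/val_inj => /=; lia.
have R1 : \rank (rowsub f1 A0) = (m * L - m)%N.
  apply/eqP; rewrite eqn_leq; apply/andP; split.
    by apply: leq_trans (rank_leq_row _) _; rewrite -mLe addnK.
  have := rank_split A0 f1 f2 cover1; rewrite PE.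
  have := rank_leq_row (rowsub f2 A0); move=> H1 H2; rewrite leq_subLR addnC; apply: leq_trans H2 _; by rewrite leq_add2l.
have c0P : (0 < T - L + 1)%N by rewrite addn1.
have gP : forall j : 'I_(T - L), (j.+1 < T - L + 1)%N by move=> j; rewrite addn1 ltnS.
pose g (j : 'I_(T - L)) : 'I_(T - L + 1) := Ordinal (gP j).
pose c0 (j : 'I_1) : 'I_(T - L + 1) := Ordinal c0P.
pose B := rowsub g A0^T.
have cover2 : forall i : 'I_(T - L + 1), (exists x, g x = i) \/ (exists y, c0 y = i).
  move=> i; case: (posnP i) => h.
    by right; exists ord0; apply/val_inj; rewrite /= h.
  have P : (i.-1 < T - L)%N by have := ltn_ord i; lia.
  by left; exists (Ordinal P); apply/val_inj => /=; lia.
have RB : (m * L - 1 <= \rank B)%N.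
  have := rank_split A0^T g c0 cover2; rewrite mxrank_tr PE.
  have := rank_leq_row (rowsub c0 A0^T); move=> H1 H2.
  rewrite leq_subLR addnC; apply: leq_trans H2 _; by rewrite leq_add2l.
have E2 : col_mx (H11 L T u k) (H21 L T u k) = castmx (esym mLe, erefl) B^T.
  apply/matrixP => i j; rewrite castmxE /B /A0 /hankel /H11 /H21 !mxE.
  case: splitP => i' /= Hi; rewrite !mxE.
    congr (u _ _ _); first by rewrite Hi; lia.
    by apply/val_inj; rewrite /= Hi.
  have Hd : (i %/ m = L - 1)%N.
    by rewrite Hi mulnC divnMDl // divn_small // addn0.
  have Hm : (i %% m = i')%N.
    by rewrite Hi (mulnC m) modnMDl modn_small.
  congr (u _ _ _); first by rewrite Hd; lia.
  by apply/val_inj; rewrite /= Hm.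
have E3 : rowsub (fun j : 'I_(T - L) => widen_ord (leq_addr 1 _) j) (hankel L T u k)^T = B.
  apply/matrixP => i j; rewrite /B /A0 /hankel !mxE.
  by congr (u _ _ _); rewrite /=; lia.
split.
- by rewrite E1.
- rewrite E2 (eqmx_cast _ _) mxrank_tr RB /=.
  by have := rank_leq_col B; rewrite -mxrank_tr.
- rewrite -mxrank_tr rank_leq_col andbT.
  apply: leq_trans RB _; rewrite -E3; exact: mxrankS (rowsub_sub _ _).
Qed.
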